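(* Let $n\geq 2$ and let $R$ be the unital associative ring $\langle x,y \mid x^n=0,\ y^n=0,\ xy+y^{n-1}x^{n-1}=1\rangle$. For $0\leq i,j<n$ put $a_{i,j}=y^ix^j-y^{i+1}x^{j+1}\in R$. Then for all $0\leq i,j,p,q<n$ we have $a_{i,j}a_{p,q}=0$ if $j\neq p$ and $a_{i,j}a_{p,q}=a_{i,q}$ if $j=p$. Moreover $$1=\sum_{i=0}^{n-1}a_{i,i},\qquad x=\sum_{i=0}^{n-2}a_{i,i+1},\qquad y=\sum_{i=0}^{n-2}a_{i+1,i}.$$
   Context: $R$ denotes the quotient of the free unital associative ring $\mathbb{Z}\langle x,y\rangle$ by the two-sided ideal generated by $x^n$, $y^n$ and $xy+y^{n-1}x^{n-1}-1$; $x^0=y^0=1$. *)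

(* Defs.v *)
From mathcomp Require Import all_boot all_order all_algebra.
Set Implicit Arguments. Unset Strict Implicit. Unset Printing Implicit Defensive.
Import GRing.Theory.
Local Open Scope ring_scope.

Definition R_relations (n : nat) (A : pzRingType) (x y : A) : Prop :=
  [/\ x ^+ n = 0, y ^+ n = 0 & x * y + y ^+ n.-1 * x ^+ n.-1 = 1].

Definition aij (A : pzRingType) (x y : A) (i j : nat) : A :=
  y ^+ i * x ^+ j - y ^+ i.+1 * x ^+ j.+1.

(* Main.v *)
Require Import Defs.
From mathcomp Require Import all_boot all_order all_algebra.
Import GRing.Theory.
Local Open Scope ring_scope.

Section Aux.
Variables (n : nat) (A : pzRingType) (x y : A).
Hypothesis hx : x ^+ n = 0.
Hypothesis hy : y ^+ n = 0.
Hypothesis hr : x * y + y ^+ n.-1 * x ^+ n.-1 = 1.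
Hypothesis hn : (2 <= n)%N.

Let g := 1 - y * x.

Lemma ye0 : y * (y ^+ n.-1 * x ^+ n.-1) = 0.
Proof. by rewrite mulrA -exprS prednK ?hy ?mul0r //; case: n hn. Qed.

Lemma xy_eq : x * y = 1 - y ^+ n.-1 * x ^+ n.-1.
Proof. by rewrite -hr addrK. Qed.

Lemma yxy : y * x * y = y.
Proof. by rewrite -mulrA xy_eq mulrBr mulr1 ye0 subr0. Qed.

Lemma xyx : x * y * x = x.
Proof.
rewrite xy_eq mulrBl mul1r -mulrA -exprSr prednK ?hx ?mulr0 ?subr0 //.
by case: n hn.
Qed.

Lemma xg : x * g = 0.
Proof. by rewrite /g mulrBr mulr1 mulrA xyx subrr. Qed.

Lemma gy : g * y = 0.
Proof. by rewrite /g mulrBl mul1r yxy subrr. Qed.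

Lemma gg : g * g = g.
Proof.
by rewrite {2}/g mulrBr mulr1 mulrA gy mul0r subr0.
Qed.

Lemma Q b : (b < n)%N -> forall a,
  x ^+ a * y ^+ b * g = if (a <= b)%N then y ^+ (b - a) * g else 0.
Proof.
elim: b => [_|b IH hb] a.
  case: a => [|a]; first by rewrite !expr0 !mul1r.
  by rewrite expr0 mulr1 exprSr -mulrA xg mulr0.
case: a => [|a]; first by rewrite expr0 mul1r subn0.
rewrite exprSr exprS.
have -> : x ^+ a * x * (y * y ^+ b) * g = x ^+ a * (x * y) * (y ^+ b * g)
  by rewrite !mulrA.
rewrite xy_eq mulrBr mulr1 mulrBl.
have H := IH (ltnW hb) n.-1.
have -> : x ^+ a * (y ^+ n.-1 * x ^+ n.-1) * (y ^+ b * g)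
        = x ^+ a * y ^+ n.-1 * (x ^+ n.-1 * y ^+ b * g) by rewrite !mulrA.
rewrite H.
have -> : (n.-1 <= b)%N = false.
  by apply/negbTE; rewrite -ltnNge; case: n hn hb => // m _ /=; rewrite ltnS.
rewrite mulr0 subr0 mulrA IH ?(ltnW hb) //.
Qed.

End Aux.

Theorem lemma4 (n : nat) (A : pzRingType) (x y : A) :
  (2 <= n)%N -> R_relations n x y ->
  (forall i j p q : nat, (i < n)%N -> (j < n)%N -> (p < n)%N -> (q < n)%N ->
     aij x y i j * aij x y p q = (if j == p then aij x y i q else 0)) /\
  1 = \sum_(i < n) aij x y i i /\
  x = \sum_(i < n.-1) aij x y i i.+1 /\
  y = \sum_(i < n.-1) aij x y i.+1 i.
Proof.
move=> hn [hx hy hr].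
have aE i j : aij x y i j = y ^+ i * (1 - y * x) * x ^+ j.
  by rewrite /aij mulrBr mulr1 mulrBl (exprSr y) (exprS x) !mulrA.
split.
  move=> i j p q hi hj hp hq.
  rewrite !aE.
  have -> : y ^+ i * (1 - y * x) * x ^+ j * (y ^+ p * (1 - y * x) * x ^+ q)
      = y ^+ i * (1 - y * x) * ((x ^+ j * y ^+ p * (1 - y * x)) * x ^+ q).
    by rewrite !mulrA.
  rewrite (@Q n A x y hx hr hn p hp) leq_eqVlt.
  case: eqVneq => [<-|hjp] /=.
    rewrite subnn expr0 mul1r (mulrA _ (1 - y * x)) -(mulrA _ (1 - y * x) (1 - y * x)).
    by rewrite (@gg n A x y hy hr hn).
  case: ifP => hlt; last by rewrite mul0r mulr0.
  case E: (p - j)%N => [|k].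
    by move: hlt; rewrite -subn_gt0 E.
  rewrite exprS -!mulrA (mulrA _ y) -/(1 - y * x).
  have := @gy n A x y hy hr hn; rewrite /= => ->.
  by rewrite !(mul0r, mulr0).
have tel : forall (f : nat -> A) m, \sum_(i < m) (f i - f i.+1) = f 0%N - f m.
  move=> f m; rewrite -(big_mkord xpredT (fun i => f i - f i.+1)).
  rewrite (@telescope_sumr_eq _ 0 m (fun i => - f i)) ?leq0n //.
    by rewrite opprK addrC.
  by move=> k _; rewrite opprK addrC.
split; first by rewrite /aij (tel (fun i => y ^+ i * x ^+ i)) !expr0 mul1r hy mul0r subr0.
have hn1 : n = n.-1.+1 by rewrite prednK // ltnW.
split.
  rewrite /aij (tel (fun i => y ^+ i * x ^+ i.+1)) expr0 mul1r expr1 -hn1 hx.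
  by rewrite mulr0 subr0.
rewrite /aij (tel (fun i => y ^+ i.+1 * x ^+ i)) expr0 mulr1 expr1 -hn1 hy.
by rewrite mul0r subr0.
Qed.
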